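(* Let $A\in\mathfrak{so}(q_1)^p$ and $B\in\mathfrak{so}(q_2)^p$ each have linearly independent components. Suppose each of them is a distinguished point for $SL(q_i,\mathbb R)\times SL(p,\mathbb R)$ (with $q_1$, $q_2$ respectively) and is $SL(p,\mathbb R)$-minimal. Then there exists $c>0$ such that the concatenation $C=A+_c(cB)\in\mathfrak{so}(q_1+q_2)^p$ is a distinguished point for $SL(q_1+q_2,\mathbb R)\times SL(p,\mathbb R)$ and is $SL(p,\mathbb R)$-minimal. Consequently $\mathbb R^{p+q_1+q_2}(C)$ with its standard inner product is a nilsoliton.
   Context: $\mathfrak{so}(q)$ denotes the real skew-symmetric $q\times q$ matrices, with inner product $\langle X,Y\rangle=\mathrm{tr}(XY^T)$. The group $GL(q,\mathbb R)\times GL(p,\mathbb R)$ acts on $\mathfrak{so}(q)^p$ by $(g,h)\cdot(C_1,\dots,C_p)=(C'_1,\dots,C'_p)$ with $C'_k=\sum_i h_{ki}\,gC_ig^T$. The Lie algebra action of $(X,Y)$ is $\big((X,Y)\cdot C\big)_k=XC_k+C_kX^T+\sum_iY_{ki}C_i$. Moment maps: $m_1(C)=-2\sum_iC_i^2$ and $m_2(C)=[\mathrm{tr}(C_iC_j^T)]_{ij}$. Their traceless parts $m_1^0$, $m_2^0$ are the $SL$ moment maps. $C$ is distinguished for $SL(q)\times SL(p)$ if $(m_1^0(C),m_2^0(C))\cdot C=rC$ for some $r\in\mathbb R$. $C$ is $SL(p)$-minimal if $m_2^0(C)=0$. Concatenation: for $A\in\mathfrak{so}(q_1)^p$ and $B\in\mathfrak{so}(q_2)^p$,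 $A+_cB\in\mathfrak{so}(q_1+q_2)^p$ has $k$-th component the block-diagonal matrix $\mathrm{diag}(A_k,B_k)$. For $C\in\mathfrak{so}(q)^p$ with linearly independent components, $\mathbb R^{p+q}(C)$ is the two-step nilpotent Lie algebra on $\mathbb R^{q+p}$ with $[e_i,e_j]=\sum_k(C_k)_{ij}e_{q+k}$ for $i,j\le q$ and all other brackets of basis vectors zero. Its standard inner product makes $\{e_i\}$ orthonormal. A nilsoliton is an inner product whose Ricci operator equals $\lambda\mathrm{Id}+D$ for some $\lambda\in\mathbb R$ and some symmetric derivation $D$. *)

(* Defs.v *)
From HB Require Import structures.
From mathcomp Require Import all_boot all_order all_algebra.
Set Implicit Arguments. Unset Strict Implicit. Unset Printing Implicit Defensive.
Import Order.TTheory GRing.Theory Num.Theory.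
Local Open Scope ring_scope.

Section Defs.
Variable R : rcfType.

(* An element of so(q)^p : a p-tuple of q x q matrices. *)
Definition tup (q p : nat) := 'I_p -> 'M[R]_q.

Definition skew (q : nat) (X : 'M[R]_q) := X^T = - X.
Definition is_so_tuple (q p : nat) (C : tup q p) := forall k, skew (C k).

Definition lin_indep (q p : nat) (C : tup q p) :=
  forall a : 'I_p -> R, \sum_(k < p) a k *: C k = 0 -> forall k, a k = 0.

Definition m1 (q p : nat) (C : tup q p) : 'M[R]_q :=
  - 2%:R *: \sum_(i < p) (C i *m C i).
Definition m2 (q p : nat) (C : tup q p) : 'M[R]_p :=
  \matrix_(i, j) \tr (C i *m (C j)^T).

Definition traceless (n : nat) (M : 'M[R]_n) : 'M[R]_n :=
  M - (\tr M / n%:R) *: 1%:M.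

Definition m1_0 q p (C : tup q p) := traceless (m1 C).
Definition m2_0 q p (C : tup q p) := traceless (m2 C).

Definition lie_act q p (X : 'M[R]_q) (Y : 'M[R]_p) (C : tup q p) : tup q p :=
  fun k => X *m C k + C k *m X^T + \sum_(i < p) Y k i *: C i.

Definition scale_tup q p (c : R) (C : tup q p) : tup q p := fun k => c *: C k.

Definition distinguished q p (C : tup q p) :=
  exists r : R, lie_act (m1_0 C) (m2_0 C) C = scale_tup r C.

Definition SLp_minimal q p (C : tup q p) := m2_0 C = 0.

Definition concat q1 q2 p (A : tup q1 p) (B : tup q2 p) : tup (q1 + q2) p :=
  fun k => block_mx (A k) 0 0 (B k).

(* Structure constants of R^{q+p}(C) in the basis e_0..e_{q+p-1}:
   [e_i, e_j] = \sum_l sc C i j l e_l. *)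
Definition sc q p (C : tup q p) (i j l : 'I_(q + p)) : R :=
  match split i, split j, split l with
  | inl a, inl b, inr k => C k a b
  | _, _, _ => 0
  end.

(* A metric Lie algebra on R^n given by structure constants w.r.t. an
   orthonormal basis (standard inner product); vectors are columns. *)
Definition ebasis n (i : 'I_n) : 'cV[R]_n := delta_mx i 0.

Definition bracket n (c : 'I_n -> 'I_n -> 'I_n -> R) (x y : 'cV[R]_n) : 'cV[R]_n :=
  \col_l \sum_(i < n) \sum_(j < n) x i 0 * y j 0 * c i j l.

(* matrix of ad_x : column j is [x, e_j] *)
Definition adm n (c : 'I_n -> 'I_n -> 'I_n -> R) (x : 'cV[R]_n) : 'M[R]_n :=
  \matrix_(l, j) \sum_(i < n) x i 0 * c i j l.

(* Ricci operator of a left-invariant metric (standard formula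
   Ric = M - 1/2 B - S(ad H), cf. Besse 7.38 / Lauret):
   <M x,y> = -1/2 sum <[x,e_i],e_j><[y,e_i],e_j> + 1/4 sum <[e_i,e_j],x><[e_i,e_j],y>,
   B = Killing form, <H,x> = tr ad x, S(T) = (T + T^T)/2. *)
Definition ricci n (c : 'I_n -> 'I_n -> 'I_n -> R) : 'M[R]_n :=
  let Mm := \matrix_(a, b)
     (- (1 / 2%:R) * \sum_(i < n) \sum_(j < n) c a i j * c b i j
      + (1 / 4%:R) * \sum_(i < n) \sum_(j < n) c i j a * c i j b) in
  let Kil := \matrix_(a, b) \tr (adm c (ebasis a) *m adm c (ebasis b)) in
  let H := \col_(a < n) \tr (adm c (ebasis a)) in
  Mm - (1 / 2%:R) *: Kil - (1 / 2%:R) *: (adm c H + (adm c H)^T).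

Definition derivation n (c : 'I_n -> 'I_n -> 'I_n -> R) (D : 'M[R]_n) :=
  forall x y : 'cV[R]_n,
    D *m bracket c x y = bracket c (D *m x) y + bracket c x (D *m y).

Definition nilsoliton n (c : 'I_n -> 'I_n -> 'I_n -> R) :=
  exists (lam : R) (D : 'M[R]_n),
    D^T = D /\ derivation c D /\ ricci c = lam%:M + D.

End Defs.

(* Main.v *)
Require Import Defs.
From HB Require Import structures.
From mathcomp Require Import all_boot all_order all_algebra.
From Stdlib Require Import FunctionalExtensionality.
Import Order.TTheory GRing.Theory Num.Theory.
Local Open Scope ring_scope.
Set Implicit Arguments. Unset Strict Implicit.

Section S0.
Variable R : rcfType.

Lemma split_l m n (i : 'I_m) : split (lshift n i) = inl i.
Proof. exact: (unsplitK (inl i)). Qed.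
Lemma split_r m n (i : 'I_n) : split (rshift m i) = inr i.
Proof. exact: (unsplitK (inr i)). Qed.

Variables (q p : nat) (C : tup R q p).

Lemma sc_lll a b k : sc C (lshift p a) (lshift p b) (rshift q k) = C k a b.
Proof. by rewrite /sc !split_l split_r. Qed.
Lemma sc_l i j a : sc C i j (lshift p a) = 0.
Proof. by rewrite /sc split_l; case: (split i); case: (split j). Qed.
Lemma sc_r1 i j k : sc C (rshift q k) j i = 0.
Proof. by rewrite /sc split_r. Qed.
Lemma sc_r2 i j k : sc C i (rshift q k) j = 0.
Proof. by rewrite /sc split_r; case: (split i). Qed.

End S0.

Section S.
Variable R : rcfType.
Variables (q p : nat) (C : tup R q p).

Lemma adm_e (a : 'I_(q+p)) : adm (sc C) (ebasis R a) = \matrix_(l, j) sc C a j l.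
Proof.
apply/matrixP => l j; rewrite !mxE (bigD1 a) //= big1 ?addr0.
  by rewrite /ebasis mxE !eqxx mul1r.
by move=> i /negbTE ne; rewrite /ebasis mxE ne mul0r.
Qed.

Lemma kil0 : (\matrix_(a, b) \tr (adm (sc C) (ebasis R a) *m adm (sc C) (ebasis R b)) : 'M_(q+p)) = 0.
Proof.
apply/matrixP => a b; rewrite !mxE !adm_e /mxtrace big1 // => l _.
rewrite mxE big1 // => j _; rewrite !mxE.
case: (split_ordP l) => [l' ->|k ->]; first by rewrite sc_l mul0r.
by rewrite sc_r2 mulr0.
Qed.

Lemma H0 : (\col_(a < q + p) \tr (adm (sc C) (ebasis R a))) = 0.
Proof.
apply/matrixP => a b; rewrite !mxE adm_e /mxtrace big1 // => l _.
rewrite mxE.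
case: (split_ordP l) => [l' ->|k ->]; first by rewrite sc_l.
by rewrite sc_r2.
Qed.

Lemma adm0 : adm (sc C) 0 = 0.
Proof. by apply/matrixP => a b; rewrite !mxE big1 // => i _; rewrite mxE mul0r. Qed.


Lemma S1_ll i i' : \sum_(x < q + p) \sum_(y < q + p) sc C (lshift p i) x y * sc C (lshift p i') x y
  = \sum_(a < q) \sum_(k < p) C k i a * C k i' a.
Proof.
rewrite big_split_ord /= [X in _ + X]big1 ?addr0; last first.
  by move=> x _; apply: big1 => y _; rewrite sc_r2 mul0r.
apply: eq_bigr => a _; rewrite big_split_ord /= big1 ?add0r.
  by apply: eq_bigr => k _; rewrite !sc_lll.
by move=> y _; rewrite sc_l mul0r.
Qed.

Lemma S2_rr k k' : \sum_(x < q + p) \sum_(y < q + p) sc C x y (rshift q k) * sc C x y (rshift q k')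
  = \sum_(a < q) \sum_(b < q) C k a b * C k' a b.
Proof.
rewrite big_split_ord /= [X in _ + X]big1 ?addr0; last first.
  by move=> x _; apply: big1 => y _; rewrite sc_r1 mul0r.
apply: eq_bigr => a _; rewrite big_split_ord /= [X in _ + X]big1 ?addr0.
  by apply: eq_bigr => b _; rewrite !sc_lll.
by move=> y _; rewrite sc_r2 mul0r.
Qed.

Lemma four_two : (4%:R : R)^-1 * 2%:R = 2%:R^-1.
Proof.
by rewrite (natrM R 2 2) invfM -mulrA mulVf ?mulr1 // pnatr_eq0.
Qed.


Lemma Z2l a b : \sum_(x < q + p) \sum_(y < q + p) sc C x y (lshift p a) * sc C x y b = 0.
Proof. by apply: big1 => x _; apply: big1 => y _; rewrite sc_l mul0r. Qed.
Lemma Z2l' a b : \sum_(x < q + p) \sum_(y < q + p) sc C x y b * sc C x y (lshift p a) = 0.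
Proof. by apply: big1 => x _; apply: big1 => y _; rewrite sc_l mulr0. Qed.
Lemma Z1r k b : \sum_(x < q + p) \sum_(y < q + p) sc C (rshift q k) x y * sc C b x y = 0.
Proof. by apply: big1 => x _; apply: big1 => y _; rewrite sc_r1 mul0r. Qed.
Lemma Z1r' k b : \sum_(x < q + p) \sum_(y < q + p) sc C b x y * sc C (rshift q k) x y = 0.
Proof. by apply: big1 => x _; apply: big1 => y _; rewrite sc_r1 mulr0. Qed.

Lemma ricci_sc : is_so_tuple C ->
  ricci (sc C) = block_mx (- (4%:R^-1) *: m1 C) 0 0 (4%:R^-1 *: m2 C).
Proof.
move=> sk; rewrite /ricci /= kil0 H0 adm0 trmx0 !addr0 scaler0 !subr0.
apply/matrixP => a b.
case: (split_ordP a) => [i ->|k ->]; case: (split_ordP b) => [i' ->|k' ->].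
- rewrite block_mxEul !mxE S1_ll Z2l.
  rewrite mulr0 addr0 /m1 summxE mul1r exchange_big /= !mulNr mulrN opprK mulrA four_two -mulrN.
  congr (_ * _).
  rewrite -sumrN; apply: eq_bigr => k _; rewrite mxE -sumrN; apply: eq_bigr => x _.
  have := congr1 (fun M : 'M[R]_q => M i' x) (sk k : (C k)^T = - C k); rewrite !mxE => ->.
  by rewrite mulrN.
- by rewrite block_mxEur !mxE Z2l Z1r' mulr0 mulr0 addr0.
- by rewrite block_mxEdl !mxE Z2l' Z1r mulr0 mulr0 addr0.
- rewrite block_mxEdr !mxE S2_rr Z1r.
  rewrite mulr0 add0r mul1r /mxtrace; congr (_ * _); apply: eq_bigr => x _.
  by rewrite mxE; apply: eq_bigr => y _; rewrite mxE.
Qed.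

Lemma bracket_sc (x y : 'cV[R]_(q + p)) :
  bracket (sc C) x y =
  col_mx 0 (\col_k (((usubmx x)^T *m C k *m usubmx y) 0 0)).
Proof.
apply/matrixP => l j; rewrite mxE.
case: (split_ordP l) => [l' ->|k ->].
  rewrite col_mxEu mxE; apply: big1 => a _; apply: big1 => b _.
  by rewrite sc_l mulr0.
rewrite col_mxEd !mxE.
rewrite big_split_ord /= [X in _ + X]big1 ?addr0; last first.
  by move=> a _; apply: big1 => b _; rewrite sc_r1 mulr0.
rewrite exchange_big /= big_split_ord /= [X in _ + X]big1 ?addr0; last first.
  by move=> b _; apply: big1 => a _; rewrite sc_r2 mulr0.
apply: eq_bigr => b _; rewrite mxE mulr_suml; apply: eq_bigr => a _.
by rewrite sc_lll !mxE mulrAC.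
Qed.

Lemma Dmul (D1 : 'M[R]_q) b (z : 'cV[R]_(q + p)) :
  block_mx D1 0 0 b%:M *m z = col_mx (D1 *m usubmx z) (b *: dsubmx z).
Proof.
by rewrite -{1}[z]vsubmxK mul_block_col !mul0mx addr0 add0r mul_scalar_mx.
Qed.

Lemma deriv_sc (D1 : 'M[R]_q) b : D1^T = D1 ->
  (forall k, D1 *m C k + C k *m D1 = b *: C k) ->
  derivation (sc C) (block_mx D1 0 0 b%:M).
Proof.
move=> sD hD x y; rewrite !bracket_sc !Dmul !col_mxKu col_mxKd mulmx0 add_col_mx addr0.
congr col_mx; apply/matrixP => k j.
set u := usubmx x; set v := usubmx y.
have e : (D1 *m u)^T *m C k *m v + u^T *m C k *m (D1 *m v) = b *: (u^T *m C k *m v).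
  rewrite scalemxAl scalemxAr -hD trmx_mul sD mulmxDr mulmxDl !mulmxA.
  by [].
have := congr1 (fun M : 'M[R]_1 => M 0 0) e.
rewrite !mxE => <-.
by [].
Qed.

Lemma m1_sym : is_so_tuple C -> (m1 C)^T = m1 C.
Proof.
move=> sk; rewrite /m1 linearZ linear_sum /=; congr (_ *: _).
apply: eq_bigr => k _; rewrite trmx_mul.
by rewrite (sk k : (C k)^T = - C k) mulmxN mulNmx opprK.
Qed.

Lemma h4 (V : zmodType) (X Y Z : V) : X - Z + (Y - Z) = X + Y - (Z + Z).
Proof. by rewrite opprD !addrA [X - Z + Y]addrAC. Qed.

Lemma nil_sc s mu : is_so_tuple C ->
  (forall k, m1 C *m C k + C k *m m1 C = s *: C k) -> m2 C = mu%:M ->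
  nilsoliton (sc C).
Proof.
move=> sk hs hm.
set u := (4%:R : R)^-1.
pose lam := - (u * s) - u * mu.
have lamE : u * mu = - (u * s) - lam by rewrite /lam opprB addrC subrK.
clearbody lam.
set D1 := - u *: m1 C - lam%:M.
set b := u * mu - lam.
exists lam, (block_mx D1 0 0 b%:M); split; [|split].
- rewrite tr_block_mx !trmx0 tr_scalar_mx /D1 linearB linearZ /= m1_sym //.
  by rewrite tr_scalar_mx.
- apply: deriv_sc.
    by rewrite /D1 linearB linearZ /= m1_sym // tr_scalar_mx.
  move=> k; rewrite /D1 mulmxBl mulmxBr mul_scalar_mx mul_mx_scalar.
  rewrite -scalemxAl -scalemxAr h4 -scalerDr hs scalerA -scalerDl -scalerBl.
  by rewrite mulNr opprD addrA /b lamE.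
- rewrite ricci_sc // hm (scalar_mx_block _ _ lam) add_block_mx !addr0.
  rewrite scale_scalar_mx /D1 /b addrC subrK -raddfD /= addrC subrK.
  by [].
Qed.

Lemma min_sc mu : m2 C = mu%:M -> SLp_minimal C.
Proof.
move=> hm; rewrite /SLp_minimal /m2_0 /traceless hm mxtrace_scalar.
case: (posnP p) => [p0|pp].
  by apply/matrixP => i; have := ltn_ord i; rewrite {2}p0.
rewrite -[mu *+ p]mulr_natr mulfK; last by rewrite pnatr_eq0 -lt0n.
by rewrite scalemx1 subrr.
Qed.

Lemma dist_sc s mu : is_so_tuple C ->
  (forall k, m1 C *m C k + C k *m m1 C = s *: C k) -> m2 C = mu%:M ->
  distinguished C.
Proof.
move=> sk hs hm; have m0 := min_sc hm.
set t := \tr (m1 C) / q%:R.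
exists (s - (t + t)); apply: functional_extensionality => k.
rewrite /lie_act /scale_tup.
rewrite big1 ?addr0; last by move=> i _; rewrite m0 mxE scale0r.
rewrite /m1_0 /traceless -/t scalemx1 linearB /= tr_scalar_mx m1_sym //.
rewrite mulmxBl mulmxBr mul_scalar_mx mul_mx_scalar h4 hs.
by rewrite -scalerDl -scalerBl.
Qed.
End S.

Section Concat.
Variable R : rcfType.
Variables (q1 q2 p : nat) (A : tup R q1 p) (B : tup R q2 p).

Lemma sum_block (f : 'I_p -> 'M[R]_q1) (g : 'I_p -> 'M[R]_q2) :
  \sum_(i < p) block_mx (f i) 0 0 (g i) = block_mx (\sum_i f i) 0 0 (\sum_i g i).
Proof.
apply: (big_rec3 (fun x y z => x = block_mx y 0 0 z)).
  by rewrite block_mx0.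
by move=> i x y z _ ->; rewrite add_block_mx !addr0.
Qed.

Lemma m1_concat : m1 (concat A B) = block_mx (m1 A) 0 0 (m1 B).
Proof.
rewrite /m1 /concat.
under eq_bigr do rewrite mulmx_block !mulmx0 !mul0mx !addr0 add0r.
by rewrite sum_block scale_block_mx !scaler0.
Qed.

Lemma m2_concat : m2 (concat A B) = m2 A + m2 B.
Proof.
apply/matrixP => i j; rewrite !mxE /concat tr_block_mx !trmx0 mulmx_block.
by rewrite mxtrace_block !mulmx0 addr0 add0r.
Qed.

Lemma skew_concat : is_so_tuple A -> is_so_tuple B -> is_so_tuple (concat A B).
Proof.
move=> sa sb k; red; rewrite /concat tr_block_mx !trmx0.
by rewrite (sa k : (A k)^T = _) (sb k : (B k)^T = _) opp_block_mx !oppr0.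
Qed.

Lemma eq_concat s : (forall k, m1 A *m A k + A k *m m1 A = s *: A k) ->
  (forall k, m1 B *m B k + B k *m m1 B = s *: B k) ->
  forall k, m1 (concat A B) *m concat A B k + concat A B k *m m1 (concat A B)
     = s *: concat A B k.
Proof.
move=> ha hb k; rewrite m1_concat /concat !mulmx_block !mulmx0 !mul0mx !addr0.
by rewrite !add0r add_block_mx ha hb !addr0 scale_block_mx !scaler0.
Qed.

End Concat.

Section Scale.
Variable R : rcfType.
Variables (q p : nat) (B : tup R q p) (c : R).

Lemma m1_scale : m1 (scale_tup c B) = (c * c) *: m1 B.
Proof.
rewrite /m1 /scale_tup [RHS]scalerA [c * c * _]mulrC -[RHS]scalerA [in RHS]scaler_sumr; congr (_ *: _).
by apply: eq_bigr => i _; rewrite -scalemxAl -scalemxAr scalerA.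
Qed.

Lemma m2_scale : m2 (scale_tup c B) = (c * c) *: m2 B.
Proof.
apply/matrixP => i j; rewrite !mxE /scale_tup linearZ /= -scalemxAl -scalemxAr.
by rewrite scalerA mxtraceZ.
Qed.

Lemma skew_scale : is_so_tuple B -> is_so_tuple (scale_tup c B).
Proof. by move=> sb k; red; rewrite /scale_tup linearZ /= (sb k : (B k)^T = _) scalerN. Qed.

Lemma eq_scale s : (forall k, m1 B *m B k + B k *m m1 B = s *: B k) ->
  forall k, m1 (scale_tup c B) *m scale_tup c B k + scale_tup c B k *m m1 (scale_tup c B)
     = (c * c * s) *: scale_tup c B k.
Proof.
move=> hb k; rewrite m1_scale /scale_tup.
have mm : forall (X Y : 'M[R]_q) (a b : R), (a *: X) *m (b *: Y) = (a * b) *: (X *m Y).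
  by move=> X Y a b; rewrite -scalemxAl -scalemxAr scalerA.
rewrite !mm [c * (c * c)]mulrA -scalerDr hb !scalerA.
by rewrite mulrAC.
Qed.
End Scale.

Section Pos.
Variable R : rcfType.

Lemma mul_self_ge0 (x : R) : 0 <= x * x.
Proof. by rewrite -expr2 sqr_ge0. Qed.

Lemma sqE n (X : 'M[R]_n) : \tr (X *m X^T) = \sum_i \sum_j X i j * X i j.
Proof. by apply: eq_bigr => i _; rewrite mxE; apply: eq_bigr => j _; rewrite mxE. Qed.

Lemma sq_ge0 n (X : 'M[R]_n) : 0 <= \tr (X *m X^T).
Proof. by rewrite sqE; apply: sumr_ge0 => i _; apply: sumr_ge0 => j _; apply: mul_self_ge0. Qed.

Lemma sq_eq0 n (X : 'M[R]_n) : \tr (X *m X^T) = 0 -> X = 0.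
Proof.
rewrite sqE => h; apply/matrixP => i j; rewrite mxE.
have ge : forall i', true -> 0 <= \sum_j X i' j * X i' j.
  by move=> i' _; apply: sumr_ge0 => j' _; exact: mul_self_ge0.
have h1 := psumr_eq0P ge h isT.
have ge2 : forall j', true -> 0 <= X i j' * X i j' by move=> *; exact: mul_self_ge0.
have h2 := psumr_eq0P ge2 (h1 i) isT.
by apply/eqP; rewrite -sqrf_eq0 expr2 (h2 j).
Qed.

Variables (q p : nat) (A : tup R q p).

Lemma from_dist : is_so_tuple A -> distinguished A -> SLp_minimal A ->
  exists s mu, (forall k, m1 A *m A k + A k *m m1 A = s *: A k) /\ m2 A = mu%:M.
Proof.
move=> sk [r hr] hm.
exists (r + (\tr (m1 A) / q%:R + \tr (m1 A) / q%:R)), (\tr (m2 A) / p%:R); split.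
  move=> k; have := congr1 (fun f => f k) hr.
  rewrite /lie_act /scale_tup big1 ?addr0; last by move=> i _; rewrite hm mxE scale0r.
  rewrite /m1_0 /traceless scalemx1 linearB /= tr_scalar_mx m1_sym //.
  rewrite mulmxBl mulmxBr mul_scalar_mx mul_mx_scalar h4.
  by move/eqP; rewrite subr_eq => /eqP ->; rewrite !scalerDl.
by move: hm; rewrite /SLp_minimal /m2_0 /traceless scalemx1 => /eqP; rewrite subr_eq0 => /eqP.
Qed.

Lemma term_eq (M a : 'M[R]_q) : a^T = - a ->
  \tr ((M *m a + a *m M) *m a^T) = \tr (M *m (-2 *: (a *m a))).
Proof.
move=> sa; rewrite sa mulmxDl mxtraceD.
rewrite (mxtrace_mulC (a *m M) (-a)) mulmxA (mxtrace_mulC (-a *m a) M) -(mulmxA M a (-a)).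
rewrite scaleNr scaler_nat mulr2n.
by rewrite mulmxN mulNmx opprD mulmxDr mxtraceD.
Qed.

Lemma pos_s s : is_so_tuple A -> lin_indep A -> (0 < p)%N ->
  (forall k, m1 A *m A k + A k *m m1 A = s *: A k) -> 0 < s.
Proof.
move=> sk li pp hs.
pose N := \sum_k \tr (A k *m (A k)^T).
have Nge : 0 <= N by apply: sumr_ge0 => k _; exact: sq_ge0.
have N0 : N != 0.
  apply/eqP => h.
  have h' := psumr_eq0P (fun k (_ : true) => sq_ge0 (A k)) h.
  have Ak0 : forall k, A k = 0 by move=> k; apply: sq_eq0; apply: h'.
  suff : (1 : R) = 0 by move/eqP; rewrite oner_eq0.
  apply: (li (fun _ => 1) _ (Ordinal pp)).
  by apply: big1 => k _; rewrite Ak0 scaler0.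
have Npos : 0 < N by rewrite lt0r N0 Nge.
have key : s * N = \tr (m1 A *m (m1 A)^T).
  rewrite /N mulr_sumr.
  under eq_bigr => k _ do rewrite -mxtraceZ scalemxAl -hs term_eq ?(sk k) //.
  rewrite -raddf_sum /= -mulmx_sumr -scaler_sumr m1_sym //.
have : 0 < s * N.
  rewrite key lt0r sq_ge0 andbT; apply/eqP => /sq_eq0 m0.
  have t2 : \tr (m1 A) = 2%:R * N.
    rewrite /m1 mxtraceZ raddf_sum /N mulNr -mulrN -sumrN; congr (_ * _).
    by apply: eq_bigr => k _; rewrite (sk k : (A k)^T = _) mulmxN raddfN.
  move: t2; rewrite m0 mxtrace0 => /esym/eqP; rewrite mulf_eq0 pnatr_eq0 /=.
  by rewrite (negbTE N0).
by rewrite pmulr_lgt0.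
Qed.
End Pos.

Unset Implicit Arguments.

Lemma final (R : rcfType) q p (C : tup R q p) s mu : is_so_tuple C ->
  (forall k, m1 C *m C k + C k *m m1 C = s *: C k) -> m2 C = mu%:M ->
  distinguished C /\ SLp_minimal C /\ nilsoliton (sc C).
Proof.
move=> sk hs hm; split; first exact: dist_sc hs hm.
by split; [exact: min_sc hm | exact: nil_sc sk hs hm].
Qed.

Theorem mainTheorem2 (R : rcfType) (p q1 q2 : nat)
  (A : tup R q1 p) (B : tup R q2 p) :
  is_so_tuple A -> is_so_tuple B ->
  lin_indep A -> lin_indep B ->
  distinguished A -> SLp_minimal A ->
  distinguished B -> SLp_minimal B ->
  exists c : R, 0 < c /\
    let C := concat A (scale_tup c B) in
    distinguished C /\ SLp_minimal C /\ nilsoliton (sc C).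
Proof.
move=> sa sb la lb da ma db mb.
case: (posnP p) => [p0|pp].
  exists 1; split; first exact: ltr01.
  move=> C; apply: (@final _ _ _ C 0 0).
  - exact: skew_concat sa (skew_scale _ sb).
  - by move=> k; have := ltn_ord k; rewrite {2}p0.
  - by apply/matrixP => i; have := ltn_ord i; rewrite {2}p0.
have [sA [muA [hA mA]]] := from_dist sa da ma.
have [sB [muB [hB mB]]] := from_dist sb db mb.
have sA0 := pos_s sa la pp hA.
have sB0 := pos_s sb lb pp hB.
pose c := Num.sqrt (sA / sB).
have c0 : 0 < c by rewrite sqrtr_gt0 divr_gt0.
have cc : c * c * sB = sA.
  rewrite -expr2 sqr_sqrtr ?divfK // ?ltW ?divr_gt0 //.
  by rewrite gt_eqF.
exists c; split => //.
move=> C; apply: (@final _ _ _ C sA (muA + c * c * muB)).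
- exact: skew_concat sa (skew_scale _ sb).
- apply: eq_concat => // k; rewrite -[in X in _ = X *: _]cc.
  exact: eq_scale.
rewrite /C m2_concat m2_scale mA mB scale_scalar_mx.
by rewrite raddfD.
Qed.
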